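(* Let $T>0$ and let $G:\mathbb{R}\leadsto\mathbb{R}$ be a Lipschitz continuous set-valued map with nonempty, convex, closed values. Let $U,W:[0,T]\times\mathbb{R}\to\mathbb{R}$ be continuous functions such that: (U1) for every $x\in\mathrm{Sol}(G)$ and all $t_1<t_2$ in $[0,T]$, $U(t_1,x(t_1))\geqslant U(t_2,x(t_2))$; (U2) for every $(t_0,x_0)\in[0,T]\times\mathbb{R}$ there is $\bar x\in\mathrm{Sol}_G(t_0,x_0)$ with $U(t,\bar x(t))=U(t_0,x_0)$ for all $t\in[0,t_0]$; (W1) for every $x\in\mathrm{Sol}(G)$ and all $t_1<t_2$ in $[0,T]$, $W(t_1,x(t_1))\geqslant W(t_2,x(t_2))$; (W2) for every $(t_0,x_0)\in[0,T]\times\mathbb{R}$ there is $\tilde x\in\mathrm{Sol}_G(t_0,x_0)$ with $W(t_0,x_0)=W(t,\tilde x(t))$ for all $t\in[t_0,T]$. If $U(0,\cdot)=W(0,\cdot)$ and $U(T,\cdot)=W(T,\cdot)$, then $U=W$ on $[0,T]\times\mathbb{R}$.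
   Context: $\mathrm{Sol}(G)$ is the set of absolutely continuous $x:[0,T]\to\mathbb{R}$ with $\dot x(t)\in G(x(t))$ for a.e. $t\in[0,T]$, and $\mathrm{Sol}_G(t_0,x_0)$ is the subset of those with $x(t_0)=x_0$. *)

(* Defs.v *)
From HB Require Import structures.
From mathcomp Require Import all_boot all_order all_algebra.
From mathcomp Require Import all_classical all_reals all_analysis.
Set Implicit Arguments. Unset Strict Implicit. Unset Printing Implicit Defensive.
Import Order.TTheory GRing.Theory Num.Theory.
Import numFieldNormedType.Exports.
Local Open Scope classical_set_scope.
Local Open Scope ring_scope.

Definition abs_cont_on (R : realType) (a b : R) (x : R -> R) : Prop :=
  forall eps : R, 0 < eps -> exists2 delta : R, 0 < delta &
    forall (n : nat) (l r : nat -> R),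
      (forall i, (i < n)%N -> a <= l i /\ l i <= r i /\ r i <= b) ->
      (forall i j, (i < n)%N -> (j < n)%N -> i <> j -> r i <= l j \/ r j <= l i) ->
      \sum_(i < n) (r i - l i) < delta ->
      \sum_(i < n) `|x (r i) - x (l i)| < eps.

(* Sol(G) on [0,T]: absolutely continuous x with x'(t) in G(x(t)) for a.e. t in [0,T].
   Functions are taken on all of R, only their restriction to [0,T] matters. *)
Definition Sol (R : realType) (T : R) (G : R -> set R) (x : R -> R) : Prop :=
  abs_cont_on 0 T x /\
  {ae (@lebesgue_measure R), forall t, t \in `[0, T] ->
      derivable x t 1 /\ G (x t) ('D_1 x t)}.

Definition Sol_at (R : realType) (T : R) (G : R -> set R) (t0 x0 : R) (x : R -> R) : Prop :=
  Sol T G x /\ x t0 = x0.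

Definition setval_lipschitz (R : realType) (G : R -> set R) : Prop :=
  exists L : R, 0 <= L /\ forall y z v, G y v -> exists2 w, G z w & `|v - w| <= L * `|y - z|.

Definition convex_valued (R : realType) (G : R -> set R) : Prop :=
  forall y v w (l : R), G y v -> G y w -> 0 <= l -> l <= 1 -> G y (l * v + (1 - l) * w).

(* Main.v *)
Require Import Defs.
From HB Require Import structures.
From mathcomp Require Import all_boot all_order all_algebra.
From mathcomp Require Import all_classical all_reals all_analysis.
From mathcomp Require Import ring lra.
Import Order.TTheory GRing.Theory Num.Theory.
Import numFieldNormedType.Exports.
Local Open Scope classical_set_scope.
Local Open Scope ring_scope.

Lemma clamp_lip {R : realType} (a b s t : R) : a <= b ->
  `|Num.min (Num.max s a) b - Num.min (Num.max t a) b| <= `|s - t|.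
Proof.
move=> ab.
have [st|ts] := leP s t.
  rewrite (ler0_norm (x:=s - t)) ?subr_le0 //.
  rewrite ler_norml.
  case: (leP s a) => h1; case: (leP t a) => h2; 
  rewrite ?(max_r h1) ?(max_r h2) ?(max_l (ltW h1)) ?(max_l (ltW h2));
  case: (leP s b) => h3; case: (leP t b) => h4; case: (leP a b) => h5;
  rewrite ?(min_l h3) ?(min_l h4) ?(min_l h5) ?(min_r (ltW h3)) ?(min_r (ltW h4)) ?(min_r (ltW h5));
  apply/andP; split; lra.
rewrite (gtr0_norm (x:=s - t)) ?subr_gt0 //.
  rewrite ler_norml.
  case: (leP s a) => h1; case: (leP t a) => h2; 
  rewrite ?(max_r h1) ?(max_r h2) ?(max_l (ltW h1)) ?(max_l (ltW h2));
  case: (leP s b) => h3; case: (leP t b) => h4; case: (leP a b) => h5;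
  rewrite ?(min_l h3) ?(min_l h4) ?(min_l h5) ?(min_r (ltW h3)) ?(min_r (ltW h4)) ?(min_r (ltW h5));
  apply/andP; split; lra.
Qed.

Definition clamp {R : realType} (a b t : R) := Num.min (Num.max t a) b.

Lemma clamp_in {R : realType} (a b t : R) : a <= b -> a <= clamp a b t <= b.
Proof.
move=> ab; rewrite /clamp; apply/andP; split.
  by rewrite le_min ab le_max lexx orbT.
by rewrite ge_min lexx orbT.
Qed.

Lemma clamp_id {R : realType} (a b t : R) : a <= t -> t <= b -> clamp a b t = t.
Proof. by move=> h1 h2; rewrite /clamp (max_l h1) (min_l h2). Qed.

Lemma ac_cont (R : realType) (T a b : R) (x : R -> R) :
  0 <= a -> a <= b -> b <= T -> abs_cont_on 0 T x ->
  continuous (fun t => x (clamp a b t)).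
Proof.
move=> a0 ab bT AC t; apply/cvgrPdist_lt => e e0.
have [d d0 Hd] := AC e e0.
have := (cvg_id : id @ t --> t); move/cvgrPdist_lt/(_ d d0).
apply: filterS => s /= hs.
have ha := clamp_in a b t ab; have hb := clamp_in a b s ab.
set ct := clamp a b t in ha *; set cs := clamp a b s in hb *.
have := Hd 1%N (fun _ => Num.min ct cs) (fun _ => Num.max ct cs).
rewrite !big_ord1.
have lip : `|ct - cs| < d by apply: le_lt_trans (clamp_lip a b t s ab) _.
case: (leP ct cs) => h.
  rewrite distrC; apply.
  - move=> i _; split; first by move: ha => /andP[h1 _]; apply: le_trans h1.
    split; first by [].
    by move: hb => /andP[_ h1]; apply: le_trans bT.
  - by move=> [|i] [|j].
  - by apply: le_lt_trans lip; rewrite distrC; apply: ler_norm.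
apply.
- move=> i _; split; first by move: hb => /andP[h1 _]; apply: le_trans h1.
  split; first exact: ltW.
  by move: ha => /andP[_ h1]; apply: le_trans bT.
- by move=> [|i] [|j].
- by apply: le_lt_trans lip; apply: ler_norm.
Qed.

Lemma clamp_lo {R : realType} (a b t : R) : a <= b -> t <= a -> clamp a b t = a.
Proof. by move=> ab ta; rewrite /clamp (max_r ta) (min_l ab). Qed.

Lemma clamp_hi {R : realType} (a b t : R) : a <= b -> b <= t -> clamp a b t = b.
Proof.
move=> ab bt; rewrite /clamp (max_l (le_trans ab bt)) (min_r bt) //.
Qed.

Lemma ivt0 (R : realType) (g : R -> R) (a b : R) : a <= b -> continuous g ->
  g a * g b <= 0 -> exists2 s, a <= s <= b & g s = 0.
Proof.
move=> ab gc hab.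
have [s hs gs] : exists2 s, s \in `[a, b] & g s = 0.
  apply: IVT => //; first exact: continuous_subspaceT.
  case: (leP (g a) (g b)) => h; rewrite ?(min_l h) ?(max_r h) ?(min_r (ltW h)) ?(max_l (ltW h));
  apply/andP; split; nra.
by exists s => //; move: hs; rewrite in_itv.
Qed.

Lemma Ucont0 (R : realType) (T : R) (U : R -> R -> R) :
  0 <= T ->
  {within [set p : R * R | 0 <= p.1 <= T], continuous (fun p : R * R => U p.1 p.2)} ->
  continuous (U 0).
Proof.
move=> T0 HU y.
have := HU (0, y).
rewrite /continuous_at.
case: (nbhs_subspaceP [set p : R * R | 0 <= p.1 <= T] (0,y)); last first.
  by rewrite /= lexx T0.
move=> _ H.
have hp : (fun y' : R => (0 : R, y')) @ y --> ((0 : R), y).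
  apply: (@cvg_pair _ _ _ _ (nbhs (0:R)) (nbhs y)); [exact: cvg_cst | exact: cvg_id].
move=> A hA.
have := H A hA.
rewrite /within /= => hw.
have hw' : nbhs ((0:R), y) (fun p : R * R => 0 <= p.1 <= T -> A (U p.1 p.2)) := hw.
have hh : nbhs y (fun y' : R => 0 <= (0:R) <= T -> A (U 0 y')) := hp _ hw'.
change (nbhs y (fun y' => A (U 0 y'))).
move: hh; apply: filterS => y' /=.
apply.
by rewrite lexx T0.
Qed.

Theorem theorem5p4 (R : realType) (T : R) (G : R -> set R) (U W : R -> R -> R) :
  0 < T ->
  setval_lipschitz G ->
  (forall y, G y !=set0) ->
  convex_valued G ->
  (forall y, closed (G y)) ->
  {within [set p : R * R | 0 <= p.1 <= T], continuous (fun p : R * R => U p.1 p.2)} ->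
  {within [set p : R * R | 0 <= p.1 <= T], continuous (fun p : R * R => W p.1 p.2)} ->
  (* (U1) *)
  (forall x, Sol T G x -> forall t1 t2, 0 <= t1 -> t1 < t2 -> t2 <= T ->
      U t2 (x t2) <= U t1 (x t1)) ->
  (* (U2) *)
  (forall t0 x0, 0 <= t0 -> t0 <= T ->
      exists2 xb, Sol_at T G t0 x0 xb &
        forall t, 0 <= t -> t <= t0 -> U t (xb t) = U t0 x0) ->
  (* (W1) *)
  (forall x, Sol T G x -> forall t1 t2, 0 <= t1 -> t1 < t2 -> t2 <= T ->
      W t2 (x t2) <= W t1 (x t1)) ->
  (* (W2) *)
  (forall t0 x0, 0 <= t0 -> t0 <= T ->
      exists2 xt, Sol_at T G t0 x0 xt &
        forall t, t0 <= t -> t <= T -> W t0 x0 = W t (xt t)) ->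
  (forall y, U 0 y = W 0 y) ->
  (forall y, U T y = W T y) ->
  forall t y, 0 <= t -> t <= T -> U t y = W t y.
Proof.
move=> Tp _ _ _ _ HUc _ U1 U2 W1 W2 E0 ET t0 x0 h0 hT.
have T0 : 0 <= T by exact: ltW.
have UgeW : forall s p, 0 <= s -> s <= T -> W s p <= U s p.
  move=> s p s0 sT; have [xb [Sb xbs] Hb] := U2 s p s0 sT.
  case: (eqVneq s 0) => [->|sn0]; first by rewrite E0.
  have sp : 0 < s by rewrite lt_def sn0 s0.
  have := W1 xb Sb 0 s (lexx 0) sp sT; rewrite xbs => h.
  by rewrite -(Hb 0 (lexx 0) s0) E0.
have Ulev : forall x, Sol T G x -> forall s, 0 <= s -> s <= T ->
    W s (x s) = U 0 (x 0) -> U s (x s) = U 0 (x 0).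
  move=> x Sx s s0 sT hW; apply/eqP; rewrite eq_le; apply/andP; split.
    case: (eqVneq s 0) => [->|sn0]; first by [].
    have sp : 0 < s by rewrite lt_def sn0 s0.
    exact: U1 Sx 0 s (lexx 0) sp sT.
  by rewrite -hW; apply: UgeW.
have [xb [Sb xbt0] Hb] := U2 t0 x0 h0 hT.
have [xt [St xtt0] Ht] := W2 t0 x0 h0 hT.
set c := U t0 x0 in Hb *; set d := W t0 x0 in Ht *.
set z := xt T.
have WTz : W T z = d by rewrite /z -Ht.
have [v [Sv vT] Hv] := U2 T z T0 (lexx T).
have UTz : U T z = d by rewrite ET.
rewrite UTz in Hv.
set y0 := xb 0; set y1 := v 0.
have fy0 : U 0 y0 = c by rewrite /y0 Hb.
have fy1 : U 0 y1 = d by rewrite /y1 Hv.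
have claim : forall y, (y - y0) * (y - y1) <= 0 -> U 0 y = c \/ U 0 y = d.
  move=> y hy.
  have [L [SL L0] HL] := W2 0 y (lexx 0) T0.
  have HLU : forall s, 0 <= s -> s <= T -> U s (L s) = U 0 y.
    move=> s s0 sT; rewrite -L0; apply: Ulev => //.
    by rewrite -HL // L0 E0.
  have HLW : forall s, 0 <= s -> s <= T -> W s (L s) = U 0 y.
    by move=> s s0 sT; rewrite -HL // E0.
  pose Lc t := L (clamp 0 T t).
  pose Pc t := xb (clamp 0 t0 t) + xt (clamp t0 T t) - x0.
  pose vc t := v (clamp 0 T t).
  have cL : continuous Lc by apply: (@ac_cont R T 0 T L) => //; case: SL.
  have cv : continuous vc by apply: (@ac_cont R T 0 T v) => //; case: Sv.
  have cP : continuous Pc.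
    move=> t; apply: cvgB; last exact: cvg_cst.
    apply: cvgD.
      by apply: (@ac_cont R T 0 t0 xb) => //; case: Sb.
    by apply: (@ac_cont R T t0 T xt) => //; case: St.
  have h0e : Lc 0 - Pc 0 = y - y0.
    rewrite /Lc /Pc clamp_id // clamp_id // (clamp_lo _ _ _ hT h0) L0 xtt0 /y0.
    by rewrite addrK.
  have hTe : Lc T - Pc T = L T - z.
    rewrite /Lc /Pc (@clamp_id R 0 T) // (clamp_hi _ _ _ h0 hT) (@clamp_id R t0) //.
    by rewrite xbt0 addrAC subrr add0r.
  have kTe : Lc T - vc T = L T - z.
    by rewrite /Lc /vc clamp_id // vT.
  have k0e : Lc 0 - vc 0 = y - y1.
    by rewrite /Lc /vc clamp_id // L0.
  have [hprod|hprod] := leP ((y - y0) * (L T - z)) 0.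
    have hp' : (Lc 0 - Pc 0) * (Lc T - Pc T) <= 0 by rewrite h0e hTe.
    have cLP : continuous (fun t => Lc t - Pc t) by move=> t; apply: cvgB; [exact: cL|exact: cP].
    have [s /andP[s0 sT] hs] := @ivt0 R (fun t => Lc t - Pc t) 0 T T0 cLP hp'.
    move: hs => /eqP; rewrite subr_eq0 => /eqP.
    rewrite /Lc /Pc (@clamp_id R 0 T) //.
    have [st|st] := leP s t0.
      rewrite (@clamp_id R 0) // (clamp_lo _ _ _ hT st) xtt0 addrK => hs.
      by left; rewrite -(HLU s) // hs Hb.
    rewrite (clamp_hi _ _ _ h0 (ltW st)) (@clamp_id R t0) ?(ltW st) // xbt0 addrAC subrr add0r => hs.
    by right; rewrite -(HLW s) // hs -Ht // ltW.
  have kprod : (y - y1) * (L T - z) <= 0.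
    rewrite leNgt; apply/negP => hk.
    have e : (y - y0) * (L T - z) * ((y - y1) * (L T - z)) = (y - y0) * (y - y1) * ((L T - z) ^+ 2) by ring.
    have := mulr_le0_ge0 hy (sqr_ge0 (L T - z)); rewrite -e => hh.
    have := mulr_gt0 hprod hk; rewrite ltNge hh //.
  have kp' : (Lc 0 - vc 0) * (Lc T - vc T) <= 0 by rewrite k0e kTe.
  have cLv : continuous (fun t => Lc t - vc t) by move=> t; apply: cvgB; [exact: cL|exact: cv].
  have [s /andP[s0 sT] hs] := @ivt0 R (fun t => Lc t - vc t) 0 T T0 cLv kp'.
  move: hs => /eqP; rewrite subr_eq0 => /eqP.
  rewrite /Lc /vc (@clamp_id R 0 T) // => hs.
  by right; rewrite -(HLU s) // hs Hv.
have fc := @Ucont0 R T U T0 HUc.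
apply/eqP; rewrite -/c -/d; apply/negPn/negP => cd.
have key : forall a b, a <= b -> (forall y, a <= y <= b -> (y - y0) * (y - y1) <= 0) ->
    (U 0 a = c /\ U 0 b = d) \/ (U 0 a = d /\ U 0 b = c) -> False.
  move=> a b ab hin hab.
  have [m hm fm] : exists2 m, m \in `[a, b] & U 0 m = (c + d) / 2.
    apply: IVT => //; first exact: continuous_subspaceT.
    case: hab => [[-> ->]|[-> ->]];
    (case: (leP c d) => h; rewrite ?(min_l h) ?(max_r h) ?(min_r (ltW h)) ?(max_l (ltW h));
    apply/andP; split; lra).
  move: hm; rewrite in_itv /= => /hin /claim; rewrite fm => -[] e.
    by move/eqP: cd; apply; lra.
  by move/eqP: cd; apply; lra.
have [hy|hy] := leP y0 y1.
  apply: (key y0 y1 hy); last by left.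
  by move=> y /andP[h1 h2]; nra.
apply: (key y1 y0 (ltW hy)); last by right.
by move=> y /andP[h1 h2]; nra.
Qed.
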